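(* Let $\mathsf{L}$ be a normal modal logic admitting finite chains, and let $t(x,y,z) = \Box(y\vee\Box(z\vee x))\vee x$. Then for every $n\in\mathbb{N}$, $\mathcal{V}_\mathsf{L}\not\models t^n(x,y,z)\approx t^{n+1}(x,y,z)$.
   Context: $\mathcal{V}_\mathsf{L}$ denotes the variety of modal algebras corresponding to $\mathsf{L}$. Iterates in the first argument: $t^0(x,y,z):=x$, $t^{k+1}(x,y,z) := t(t^k(x,y,z),y,z)$. A finite chain is a Kripke frame $(C,R)$ with $C$ finite such that the reflexive closure of $R$ is a total order on $C$ (so an $n$-element chain is determined by a total order together with a choice of which points are reflexive). $\mathsf{L}$ admits finite chains if for each $n\in\mathbb{N}$ there is at least one $n$-element finite chain that is a frame for $\mathsf{L}$. *)

(* Defs.v *)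
(* Boolean algebras are mathcomp's ctbDistrLatticeType. *)
From HB Require Import structures.
From mathcomp Require Import all_boot all_order.
Set Implicit Arguments. Unset Strict Implicit. Unset Printing Implicit Defensive.
Import Order.Theory.
Local Open Scope order_scope.

Inductive form : Type :=
| Var of nat
| Bot
| Imp of form & form
| Box of form.

Definition Neg (f : form) : form := Imp f Bot.
Definition Or (f g : form) : form := Imp (Neg f) g.
Definition And (f g : form) : form := Neg (Imp f (Neg g)).

Fixpoint subst (s : nat -> form) (f : form) : form :=
  match f with
  | Var i => s i
  | Bot => Bot
  | Imp f g => Imp (subst s f) (subst s g)
  | Box f => Box (subst s f)
  end.

(* Normal modal logic: contains all classical tautologies (via a complete
   Hilbert axiomatisation for ->, bot) and the K axiom, and is closed under
   modus ponens, necessitation and uniform substitution. *)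
Record normal_logic (L : form -> Prop) : Prop := {
  nl_A1 : forall p q, L (Imp p (Imp q p));
  nl_A2 : forall p q r, L (Imp (Imp p (Imp q r)) (Imp (Imp p q) (Imp p r)));
  nl_A3 : forall p, L (Imp (Neg (Neg p)) p);
  nl_K : forall p q, L (Imp (Box (Imp p q)) (Imp (Box p) (Box q)));
  nl_MP : forall p q, L p -> L (Imp p q) -> L q;
  nl_Nec : forall p, L p -> L (Box p);
  nl_US : forall s p, L p -> L (subst s p)
}.

Fixpoint kripke_sat (C : Type) (R : C -> C -> Prop) (V : nat -> C -> Prop)
  (w : C) (f : form) : Prop :=
  match f with
  | Var i => V i w
  | Bot => False
  | Imp f g => kripke_sat R V w f -> kripke_sat R V w g
  | Box f => forall u, R w u -> kripke_sat R V u f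
  end.

Definition frame_for (L : form -> Prop) (C : Type) (R : C -> C -> Prop) : Prop :=
  forall f, L f -> forall (V : nat -> C -> Prop) (w : C), kripke_sat R V w f.

Definition is_chain (C : finType) (R : rel C) : Prop :=
  let Rr := fun x y => (x == y) || R x y in
  (forall x y, Rr x y -> Rr y x -> x = y) /\
  (forall x y z, Rr x y -> Rr y z -> Rr x z) /\
  (forall x y, Rr x y || Rr y x).

Definition admits_finite_chains (L : form -> Prop) : Prop :=
  forall n : nat, exists (C : finType) (R : rel C),
    #|C| = n /\ is_chain R /\ frame_for L (fun x y => R x y).

Record modal_algebra d (B : ctbDistrLatticeType d) (box : B -> B) : Prop := {
  ma_top : box \top = \top;
  ma_meet : forall a b : B, box (a `&` b) = box a `&` box b
}.

Fixpoint alg_eval d (B : ctbDistrLatticeType d) (box : B -> B)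
  (v : nat -> B) (f : form) : B :=
  match f with
  | Var i => v i
  | Bot => \bot
  | Imp f g => (~` alg_eval box v f) `|` alg_eval box v g
  | Box f => box (alg_eval box v f)
  end.

Definition in_VL (L : form -> Prop) d (B : ctbDistrLatticeType d) (box : B -> B)
  : Prop :=
  modal_algebra box /\ forall f, L f -> forall v : nat -> B, alg_eval box v f = \top.

Definition tterm d (B : ctbDistrLatticeType d) (box : B -> B) (x y z : B) : B :=
  box (y `|` box (z `|` x)) `|` x.

Fixpoint titer d (B : ctbDistrLatticeType d) (box : B -> B) (k : nat) (x y z : B)
  : B :=
  match k with
  | 0 => x
  | k'.+1 => tterm box (titer box k' x y z) y z
  end.

(* Main.v *)
Require Import Defs.
From HB Require Import structures.
From mathcomp Require Import all_boot all_order.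
Import Order.Theory.
Import Order.DefaultSetSubsetOrder.
From mathcomp Require Import zify.
Set Implicit Arguments. Unset Strict Implicit.

Section Chain.
Variables (C : finType) (R : rel C).
Hypothesis HR : is_chain R.

Let Rr := fun x y => (x == y) || R x y.

Lemma Rr_anti x y : Rr x y -> Rr y x -> x = y.
Proof. by move: HR; rewrite /is_chain => -[H _]; apply: H. Qed.
Lemma Rr_trans : transitive Rr.
Proof. by move: HR; rewrite /is_chain => -[_ [H _]] y x z; apply: H. Qed.
Lemma Rr_total : total Rr.
Proof. by move: HR; rewrite /is_chain => -[_ [_ H]]. Qed.

Let s := sort Rr (enum C).
Lemma s_perm : perm_eq s (enum C).
Proof. by rewrite /s perm_sort perm_refl. Qed.
Lemma s_uniq : uniq s.
Proof. by rewrite (perm_uniq s_perm) enum_uniq. Qed.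
Lemma s_size : size s = #|C|.
Proof. by rewrite (perm_size s_perm) cardE. Qed.
Lemma s_mem w : w \in s.
Proof. by rewrite (perm_mem s_perm) mem_enum. Qed.
Lemma s_sorted : sorted Rr s.
Proof. exact: sort_sorted Rr_total _. Qed.

Definition pos (w : C) := index w s.

Lemma pos_inj u w : pos u = pos w -> u = w.
Proof.
move=> E; rewrite -(nth_index u (s_mem u)) -(nth_index u (s_mem w)).
by rewrite /pos in E; rewrite E.
Qed.

Lemma pos_lt_card w : pos w < #|C|.
Proof. by rewrite -s_size index_mem s_mem. Qed.

Lemma pos_R {w v} : pos w < pos v -> R w v.
Proof.
move=> H.
have := sorted_ltn_nth Rr_trans w s_sorted.
move=> /(_ (pos w) (pos v)); rewrite !inE !s_size !pos_lt_card /pos.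
rewrite !nth_index ?s_mem // => /(_ isT isT H).
rewrite /Rr; case/orP => // /eqP E; by rewrite E ltnn in H.
Qed.

Lemma R_pos {w v} : R w v -> pos w <= pos v.
Proof.
move=> H; case: (leqP (pos w) (pos v)) => // H'.
have := pos_R H' => H2.
have E : w = v by apply: Rr_anti; rewrite /Rr ?H ?H2 orbT.
by rewrite E ltnn in H'.
Qed.

Lemma pos_surj i : i < #|C| -> exists w, pos w = i.
Proof.
move=> Hi; have : 0 < #|C| by case: #|C| Hi.
case/card_gt0P => x0 _.
exists (nth x0 s i); rewrite /pos index_uniq ?s_uniq ?s_size //.
Qed.

Definition bx (A : {set C}) : {set C} := [set w | [forall v, R w v ==> (v \in A)]].

Lemma bxP (A : {set C}) w : reflect (forall v, R w v -> v \in A) (w \in bx A).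
Proof.
rewrite inE; apply: (iffP forallP) => H v; first by move=> Hv; move: (H v); rewrite Hv.
by apply/implyP; apply: H.
Qed.

Lemma bx_modal : modal_algebra bx.
Proof.
split.
  by apply/setP => w; rewrite [in RHS]inE; apply/bxP => v; rewrite inE.
move=> a b; apply/setP => w; change (w \in bx (a :&: b) = (w \in bx a :&: bx b)).
rewrite in_setI; apply/bxP/andP.
  by move=> H; split; apply/bxP => v /H; rewrite in_setI => /andP[].
by case=> /bxP H1 /bxP H2 v Hv; rewrite in_setI H1 ?H2.
Qed.

Lemma eval_sat (v : nat -> {set C}) f w :
  w \in alg_eval bx v f <-> kripke_sat (fun a b => R a b) (fun i a => a \in v i) w f.
Proof.
elim: f w => [i|| f1 IH1 f2 IH2 | f IH] w /=.
- by [].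
- by rewrite in_set0.
- change (w \in (~: alg_eval bx v f1) :|: alg_eval bx v f2 <->
         (kripke_sat (fun a b => R a b) (fun i a => a \in v i) w f1 ->
          kripke_sat (fun a b => R a b) (fun i a => a \in v i) w f2)).
  rewrite in_setU in_setC; split.
    by case/orP => [/negP H1 /IH1 //| /IH2 H2 _].
  move=> H; case E: (w \in alg_eval bx v f1) => /=.
    by apply/IH2/H/IH1.
  by [].
- split.
    by move/bxP => H u /H /IH.
  by move=> H; apply/bxP => u /H /IH.
Qed.

Lemma bx_VL (L : form -> Prop) : frame_for L (fun x y => R x y) -> in_VL L bx.
Proof.
move=> HF; split; first exact: bx_modal.
move=> f Lf v; apply/setP => w; change (w \in alg_eval bx v f = (w \in setT)).
rewrite in_setT; apply/idP/eval_sat; exact: HF.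
Qed.

Definition yy : {set C} := [set w | ~~ odd (pos w)].
Definition zz : {set C} := [set w | odd (pos w)].

Lemma titer_eq k x : titer bx k.+1 x yy zz = bx (yy :|: bx (zz :|: titer bx k x yy zz)) :|: titer bx k x yy zz.
Proof. by []. Qed.

Lemma upper (X : {set C}) j : j <= #|C| -> (forall w, w \in X -> j <= pos w) ->
  forall w, w \in bx (yy :|: bx (zz :|: X)) :|: X -> j - 3 <= pos w.
Proof.
move=> Hj HX w; rewrite in_setU => /orP[|/HX H]; last by lia.
move=> Hw; case: (leqP (j - 3) (pos w)) => // Hlt; exfalso.
pose e := if odd j.-1 then j.-2 else j.-1.
have He : ~~ odd e.
  rewrite /e; case Ej: (odd j.-1) => //; last by rewrite Ej.
  move: Ej; case: j Hj Hlt {HX Hw e} => [|[|j]] //= _ _ ->; done.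
have [Hel Heh] : pos w + 2 <= e /\ e < j by rewrite /e; case: (odd j.-1); lia.
have [u Hu] : exists u, pos u = e by apply: pos_surj; lia.
have [v Hv] : exists v, pos v = e.-1 by apply: pos_surj; lia.
have : v \in yy :|: bx (zz :|: X) by apply: (bxP _ _ Hw); apply: pos_R; lia.
rewrite in_setU inE Hv.
have Ho : forall k, ~~ odd k -> 0 < k -> odd k.-1 by case => [|k] //= ; rewrite negbK.
rewrite Ho //; last by lia.
move=> /= /bxP /(_ u) H.
have : u \in zz :|: X by apply: H; apply: pos_R; lia.
rewrite in_setU inE Hu (negbTE He) /= => /HX; lia.
Qed.

Lemma lower (X : {set C}) j : (forall w, j <= pos w -> w \in X) ->
  forall w, j.-1 <= pos w -> w \in bx (yy :|: bx (zz :|: X)) :|: X.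
Proof.
move=> HX w Hw; rewrite in_setU.
case: (leqP j (pos w)) => [/HX -> | Hlt]; first by rewrite orbT.
have bxX : forall v, j <= pos v -> v \in bx (zz :|: X).
  move=> v Hv; apply/bxP => u /R_pos Hu; rewrite in_setU HX ?orbT //; lia.
apply/orP; left; apply/bxP => v Rwv; rewrite in_setU.
case: (eqVneq v w) => [->|Hne].
  case Eo: (odd (pos w)); last by rewrite inE Eo.
  apply/orP; right; apply/bxP => u Rwu; rewrite in_setU.
  case: (eqVneq u w) => [->|Hne']; first by rewrite inE Eo.
  have := R_pos Rwu => Hle.
  have : pos w != pos u.
    by apply/eqP => /pos_inj E; rewrite E eqxx in Hne'.
  move=> Hn; rewrite HX ?orbT //; lia.
have := R_pos Rwv => Hle.
have : pos w != pos v.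
  by apply/eqP => /pos_inj E; rewrite E eqxx in Hne.
move=> Hn; rewrite bxX ?orbT //; lia.
Qed.

Lemma iter_upper k : 3 * k <= #|C| -> forall w, w \in titer bx k set0 yy zz -> #|C| - 3 * k <= pos w.
Proof.
elim: k => [|k IH] Hk w /=; first by rewrite in_set0.
move=> Hw.
have := @upper _ (#|C| - 3 * k) _ (IH _) _ Hw; rewrite -/(titer bx k set0 yy zz).
have H1 : 3 * k <= #|C| by lia.
move=> H; move: (H (leq_subr _ _) H1) => H2; by rewrite mulnSr subnDA.
Qed.

Lemma iter_lower k : forall w, #|C| - k <= pos w -> w \in titer bx k set0 yy zz.
Proof.
elim: k => [|k IH] w /=.
  by rewrite subn0 => H; have := pos_lt_card w; rewrite ltnNge H.
move=> Hw; change (w \in bx (yy :|: bx (zz :|: titer bx k set0 yy zz)) :|: titer bx k set0 yy zz).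
by have := @lower _ _ IH w; rewrite -subnS; apply.
Qed.

Lemma iter_fix n k : titer bx n set0 yy zz = titer bx n.+1 set0 yy zz ->
  titer bx (n + k) set0 yy zz = titer bx n set0 yy zz.
Proof.
move=> E; elim: k => [|k IH]; first by rewrite addn0.
by rewrite addnS /= IH; exact: (esym E).
Qed.

End Chain.

Theorem lemma4p2 (L : form -> Prop) (HL : normal_logic L)
  (Hch : admits_finite_chains L) (n : nat) :
  ~ (forall (d : Order.disp_t) (B : ctbDistrLatticeType d) (box : B -> B),
       in_VL L box ->
       forall x y z : B, titer box n x y z = titer box n.+1 x y z).
Proof.
move=> H.
have [C [R [Hc [Hch' Hfr]]]] := Hch (3 * n).+1.
have E := H _ {set C} (bx R) (bx_VL Hfr) set0 (yy R) (zz R).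
have [w0 Hw0] : exists w0, pos R w0 = 0 by apply: pos_surj; rewrite Hc.
have Hin : w0 \in titer (bx R) (n + #|C|) set0 (yy R) (zz R).
  by apply: (iter_lower Hch'); rewrite Hw0 leqn0 subn_eq0 leq_addl.
rewrite (iter_fix _ E) in Hin.
have H3 : 3 * n <= #|C| by rewrite Hc.
have := iter_upper Hch' H3 Hin.
by rewrite Hw0 Hc subSn // subnn.
Qed.
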